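(* Let $0\le\tau\le\varepsilon$, $\lambda:=\tau/\varepsilon$, $u_n\in\mathcal V_{[0,1]}$. If $u$ is a minimiser of \[ \lambda\langle u,\mathbf{1} -u \rangle_{\mathcal V} + \|u-e^{-\tau\Delta}u_n\|^2_{\mathcal V} \] over $\{u\in\mathcal V_{[0,1]}:\mathcal M(u)=\mathcal M(u_n)\}$, then there exists $\beta\in\mathcal B(u)$ such that \[ u -e^{-\tau\Delta}u_n-\lambda u+\lambda\bar u\mathbf{1} =\lambda\beta -\lambda\bar\beta\mathbf{1}. \]
   Context: $G=(V,E)$ is a finite, simple, connected, undirected graph with weights $\omega_{ij}=\omega_{ji}>0$ for $ij\in E$, $\omega_{ij}=0$ otherwise; $d_i=\sum_j\omega_{ij}$, $r\in[0,1]$ fixed. $\mathcal V$ = functions $V\to\mathbb R$ with $\langle u,v\rangle_{\mathcal V}=\sum_i u_iv_id_i^r$ and norm $\|\cdot\|_{\mathcal V}$; $\mathcal V_{[0,1]}$ = functions $V\to[0,1]$. $(\Delta u)_i=d_i^{-r}\sum_j\omega_{ij}(u_i-u_j)$, $e^{-\tau\Delta}$ its matrix exponential. $\mathbf 1$ all-ones; $\mathcal M(u)=\langle u,\mathbf 1\rangle_{\mathcal V}$; $\bar v=\mathcal M(v)/\mathcal M(\mathbf 1)$. $\varepsilon>0$. For $u\in\mathcal V_{[0,1]}$, $\mathcal B(u)$ = set of $\beta\in\mathcal V$ with $\beta_i\ge0$ if $u_i=0$, $\beta_i=0$ if $0<u_i<1$, $\beta_i\le0$ if $u_i=1$. *)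

(* Defs.v *)
From HB Require Import structures.
From mathcomp Require Import all_boot all_order all_algebra.
From mathcomp Require Import all_classical all_reals all_analysis.
Set Implicit Arguments. Unset Strict Implicit. Unset Printing Implicit Defensive.
Import Order.TTheory GRing.Theory Num.Theory.
Local Open Scope ring_scope.

Section Defs.
Variable R : realType.
Variable n : nat.

Definition deg (w : 'M[R]_n) (i : 'I_n) : R := \sum_(j < n) w i j.

Definition ipV (w : 'M[R]_n) (r : R) (u v : 'cV[R]_n) : R :=
  \sum_(i < n) u i 0 * v i 0 * (deg w i) `^ r.

Definition normV2 (w : 'M[R]_n) (r : R) (u : 'cV[R]_n) : R := ipV w r u u.

Definition onesV : 'cV[R]_n := const_mx 1.

Definition massV (w : 'M[R]_n) (r : R) (u : 'cV[R]_n) : R := ipV w r u onesV.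

Definition meanV (w : 'M[R]_n) (r : R) (v : 'cV[R]_n) : R :=
  massV w r v / massV w r onesV.

(* (Delta u)_i = d_i^{-r} sum_j w_ij (u_i - u_j) *)
Definition laplacian (w : 'M[R]_n) (r : R) : 'M[R]_n :=
  \matrix_(i, j) ((deg w i) `^ (- r) *
     ((i == j)%:R * deg w i - w i j)).

Definition mxpow (A : 'M[R]_n) (k : nat) : 'M[R]_n := iter k (mulmx A) 1%:M.

Definition expm (A : 'M[R]_n) : 'M[R]_n :=
  \matrix_(i, j) limn (series (fun k : nat => (mxpow A k) i j / (k`!)%:R : R^o)).

Definition inV01 (u : 'cV[R]_n) : Prop := forall i, 0 <= u i 0 <= 1.

Definition inB (u beta : 'cV[R]_n) : Prop :=
  forall i, (u i 0 = 0 -> 0 <= beta i 0) /\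
            (0 < u i 0 < 1 -> beta i 0 = 0) /\
            (u i 0 = 1 -> beta i 0 <= 0).

End Defs.

(* Main.v *)
Require Import Defs.
From HB Require Import structures.
From mathcomp Require Import all_boot all_order all_algebra.
From mathcomp Require Import all_classical all_reals all_analysis.
From mathcomp Require Import ring lra.
Import Order.TTheory GRing.Theory Num.Theory.
Local Open Scope ring_scope.

Section S.
Local Open Scope classical_set_scope.
Variable R : realType.
Variable n : nat.

Lemma mxpowS (A : 'M[R]_n) k : mxpow A k.+1 = A *m mxpow A k.
Proof. by []. Qed.

Definition Kb (A : 'M[R]_n) : R := \sum_i \sum_j `|A i j|.

Lemma Kb_ge0 (A : 'M[R]_n) : 0 <= Kb A.
Proof. by apply: sumr_ge0 => i _; apply: sumr_ge0. Qed.

Lemma row_le_Kb (A : 'M[R]_n) i : \sum_j `|A i j| <= Kb A.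
Proof.
rewrite /Kb [X in _ <= X](bigD1 i) //= lerDl; apply: sumr_ge0 => k _; apply: sumr_ge0 => l _ //.
Qed.

Lemma mxpow_bound (A : 'M[R]_n) k i j : `|mxpow A k i j| <= Kb A ^+ k.
Proof.
elim: k i j => [|k IH] i j.
  rewrite /mxpow /= mxE expr0; case: (i == j) => /=; by rewrite ?normr1 ?normr0.
rewrite mxpowS mxE exprS.
apply: le_trans (ler_norm_sum _ _ _) _.
apply: le_trans (_ : \sum_l `|A i l| * Kb A ^+ k <= _).
  apply: ler_sum => l _; rewrite normrM; apply: ler_wpM2l => //.
rewrite -mulr_suml; apply: ler_wpM2r; first exact: exprn_ge0 (Kb_ge0 A).
exact: row_le_Kb.
Qed.

Lemma expm_cvg (A : 'M[R]_n) i j :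
  cvgn (series (fun k : nat => (mxpow A k) i j / (k`!)%:R : R^o)).
Proof.
apply: normed_cvg.
apply: (@series_le_cvg _ _ (exp_coeff (Kb A))).
- by move=> k; exact: normr_ge0.
- by move=> k; apply: exp_coeff_ge0; apply: Kb_ge0.
- move=> k /=; rewrite /exp_coeff /= normrM [X in _ * X]ger0_norm ?invr_ge0 ?ler0n //.
  apply: ler_wpM2r; first by rewrite invr_ge0 ler0n.
  exact: mxpow_bound.
- exact: (@is_cvg_series_exp_coeff R (Kb A)).
Qed.

Lemma mass_mxpow (A : 'M[R]_n) (m : 'I_n -> R) :
  (forall l, \sum_i A i l * m i = 0) ->
  forall k j, \sum_i mxpow A k i j * m i = if k is 0 then m j else 0.
Proof.
move=> hA [|k] j.
  rewrite /mxpow /= (bigD1 j) //= big1 ?mxE ?eqxx ?mul1r ?addr0 // => i /negPf ij.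
  by rewrite mxE ij mul0r.
rewrite mxpowS.
under eq_bigr do rewrite mxE mulr_suml.
rewrite exchange_big /= big1 // => l _.
under eq_bigr do rewrite mulrAC.
by rewrite -mulr_suml hA mul0r.
Qed.

Lemma mass_expm (A : 'M[R]_n) (m : 'I_n -> R) :
  (forall l, \sum_i A i l * m i = 0) ->
  forall j, \sum_i expm A i j * m i = m j.
Proof.
move=> hA j.
pose f i := series (fun k : nat => (mxpow A k) i j / (k`!)%:R : R^o).
pose g := fun N => \sum_i f i N * m i.
have H1 : g @ \oo --> (\sum_i expm A i j * m i : R^o).
  rewrite /g.
  under [X in _ --> X]eq_bigr do rewrite mxE.
  have := @cvg_big R^o 'I_n +%R 0 predT add_continuous nat \oo (index_enum _)
     (fun i N => f i N * m i) (fun i => limn (f i) * m i) _.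
  apply => // i _.
  apply: cvgMr_tmp.
  exact: (expm_cvg A i j).
have H2 : g @ \oo --> (m j : R^o).
  apply: cvg_near_cst; near=> N.
  have [N' ->] : exists N', N = N'.+1.
    by exists N.-1; rewrite prednK //; near: N; exists 1%N.
  rewrite /g /f /series /=.
  under eq_bigr do rewrite mulr_suml.
  rewrite exchange_big /= big_nat_recl //.
  have h0 : \sum_i (1%:M : 'M[R]_n) i j * m i = m j := mass_mxpow _ _ hA 0 j.
  have hS : forall k, \sum_i (A *m mxpow A k) i j * m i = 0 :=
    fun k => mass_mxpow _ _ hA k.+1 j.
  rewrite fact0 /=.
  under eq_bigr do rewrite divr1.
  rewrite h0 big1 ?addr0 // => k _.
  under eq_bigr do rewrite mulrAC.
  by rewrite -mulr_suml hS mul0r.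
exact: (cvg_unique _ H1 H2).
Unshelve. all: by end_near.
Qed.

End S.
Section G.
Local Open Scope classical_set_scope.
Variable R : realType.
Variable n : nat.
Variable w : 'M[R]_n.
Variable r : R.
Hypothesis h1n : (1 < n)%N.
Hypothesis hsym : forall i j, w i j = w j i.
Hypothesis hpos : forall i j, 0 <= w i j.
Hypothesis hconn : forall i j, connect (fun a b : 'I_n => 0 < w a b) i j.

Lemma deg_gt0 i : 0 < deg w i.
Proof.
have h0n : (0 < n)%N by apply: ltnW.
pose k0 : 'I_n := Ordinal h0n.
pose k1 : 'I_n := Ordinal h1n.
pose j := if i == k0 then k1 else k0.
have hji : j != i.
  rewrite /j; have [-> | ne] := eqVneq i k0.
    by rewrite -val_eqE.
  by rewrite eq_sym.
have /connectP [p hp hl] := hconn i j.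
case: p hp hl => [|b p] /=; first by move=> _ hl; rewrite hl eqxx in hji.
move=> /andP [hib _] _.
rewrite /deg (bigD1 b) //=; apply: (lt_le_trans hib); rewrite lerDl.
by apply: sumr_ge0 => k _.
Qed.

Definition mw (i : 'I_n) : R := deg w i `^ r.

Lemma mw_gt0 i : 0 < mw i.
Proof. exact: powR_gt0 (deg_gt0 i). Qed.

Lemma lap_col (c : R) l : \sum_i (c *: laplacian w r) i l * mw i = 0.
Proof.
have E : forall i, (c *: laplacian w r) i l * mw i = c * ((i == l)%:R * deg w i - w i l).
  move=> i; rewrite !mxE /mw powRN.
  have := mw_gt0 i; rewrite /mw => hp.
  by field; rewrite gt_eqF.
under eq_bigr do rewrite E.
rewrite -mulr_sumr sumrB (bigD1 l) //= eqxx mul1r big1 ?addr0; last first.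
  by move=> i /negPf ->; rewrite mul0r.
have -> : \sum_i w i l = deg w l by apply: eq_bigr => i _; rewrite hsym.
by rewrite subrr mulr0.
Qed.

Lemma mass_expmv (c : R) (v : 'cV[R]_n) :
  massV w r (expm (c *: laplacian w r) *m v) = massV w r v.
Proof.
rewrite /massV /ipV.
under eq_bigr do rewrite !mxE mulr1 mulr_suml.
rewrite exchange_big /=; apply: eq_bigr => j _.
rewrite mxE mulr1 -/(mw j) -(@mass_expm R n _ _ (lap_col c) j) mulr_sumr.
by apply: eq_bigr => i _; rewrite /mw; ring.
Qed.

End G.

Section Cs.
Local Open Scope classical_set_scope.
Lemma diff2 (R : realType) (n : nat) (f f' : 'I_n -> R) (j k : 'I_n) :
  j != k -> (forall i, i != j -> i != k -> f i = f' i) ->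
  \sum_i f i - \sum_i f' i = (f j - f' j) + (f k - f' k).
Proof.
move=> jk hf; rewrite -sumrB (bigD1 j) //= (bigD1 k) /=; last by rewrite eq_sym.
rewrite big1 ?addr0 // => i /andP [ij ik]; by rewrite hf // subrr.
Qed.

Lemma expm0 (R : realType) (n : nat) : expm (0 : 'M[R]_n) = 1%:M.
Proof.
apply/matrixP => i j; rewrite !mxE.
apply: (@lim_near_cst R^o); first exact: norm_hausdorff.
near=> N.
have [N' ->] : exists N', N = N'.+1.
  by exists N.-1; rewrite prednK //; near: N; exists 1%N.
rewrite /series /= big_nat_recl // big1 ?addr0.
  by rewrite /mxpow /= fact0 divr1 mxE.
by move=> k _; rewrite mxpowS mul0mx mxE mul0r.
Unshelve. all: by end_near.
Qed.

End Cs.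

Theorem theorem32 (R : realType) (n : nat) (w : 'M[R]_n) (r eps tau : R)
  (un u : 'cV[R]_n) :
  (1 < n)%N ->
  (forall i j, w i j = w j i) ->
  (forall i j, 0 <= w i j) ->
  (forall i, w i i = 0) ->
  (forall i j, connect (fun a b : 'I_n => 0 < w a b) i j) ->
  0 <= r <= 1 ->
  0 < eps ->
  0 <= tau <= eps ->
  inV01 un ->
  let lam := tau / eps in
  let z := expm (- tau *: laplacian w r) *m un in
  let F := fun v : 'cV[R]_n =>
    lam * ipV w r v (onesV R n - v) + normV2 w r (v - z) in
  (inV01 u /\ massV w r u = massV w r un) ->
  (forall v, inV01 v -> massV w r v = massV w r un -> F u <= F v) ->
  exists beta : 'cV[R]_n, inB u beta /\
    u - z - lam *: u + (lam * meanV w r u) *: onesV R n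
    = lam *: beta - (lam * meanV w r beta) *: onesV R n.
Proof.
move=> h1n hsym hpos hdiag hconn hr heps /andP [htau0 htau1] hun lam z F [hu hmu] hmin.
pose m := mw R n w r.
have mpos : forall i, 0 < m i := mw_gt0 R n w r h1n hpos hconn.
have hmass : forall x : 'cV[R]_n, massV w r x = \sum_i x i 0 * m i.
  by move=> x; rewrite /massV /ipV; apply: eq_bigr => i _; rewrite mxE mulr1.
have hz : massV w r z = massV w r un := mass_expmv R n w r h1n hsym hpos hconn (- tau) un.
have hF : forall x, F x = \sum_i (lam * (x i 0 * (1 - x i 0)) + (x i 0 - z i 0) ^+ 2) * m i.
  move=> x; rewrite /F /normV2 /ipV mulr_sumr -big_split; apply: eq_bigr => i _.
  rewrite /onesV !mxE /m /mw /=; ring.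
have hlam0 : 0 <= lam by rewrite /lam divr_ge0 // ltW.
have hlam1 : lam <= 1 by rewrite /lam ler_pdivrMr // mul1r.
have h0n : (0 < n)%N by apply: ltnW.
pose k0 : 'I_n := Ordinal h0n.
have [tau0 | taupos] : tau = 0 \/ 0 < tau.
  by move: htau0; rewrite le_eqVlt => /orP [/eqP <-|->]; [left|right].
-
  have lam0 : lam = 0 by rewrite /lam tau0 mul0r.
  have zE : z = un by rewrite /z tau0 oppr0 scale0r expm0 mul1mx.
  have := hmin un hun erefl.
  rewrite !hF.
  have -> : \sum_i (lam * (un i 0 * (1 - un i 0)) + (un i 0 - z i 0) ^+ 2) * m i = 0.
    by rewrite big1 // => i _; rewrite zE lam0 subrr expr0n /= mul0r addr0 mul0r.
  move=> hle.
  have hge : forall k : 'I_n, true -> 0 <= (lam * (u k 0 * (1 - u k 0)) + (u k 0 - z k 0) ^+ 2) * m k.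
    move=> k _; rewrite lam0 mul0r add0r; apply: mulr_ge0; first exact: sqr_ge0.
    exact: ltW.
  have hsum0 : \sum_i (lam * (u i 0 * (1 - u i 0)) + (u i 0 - z i 0) ^+ 2) * m i = 0.
    by apply/le_anti; rewrite hle /=; apply: sumr_ge0 => k _; apply: hge.
  have hsq : forall i, (lam * (u i 0 * (1 - u i 0)) + (u i 0 - z i 0) ^+ 2) * m i = 0.
    by move=> i; apply: (psumr_eq0P _ hsum0).
  have uz : forall i, u i 0 = z i 0.
    move=> i; have := hsq i; rewrite lam0 mul0r add0r => /eqP.
    rewrite mulf_eq0 (gt_eqF (mpos i)) orbF sqrf_eq0 subr_eq0 => /eqP //.
  exists 0; split.
    by move=> i; rewrite mxE; split => //; split.
  have uz' : u = z by apply/matrixP => i k; rewrite ord1; exact: uz.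
  by rewrite lam0 !mul0r !scale0r uz' subrr !subr0 addr0.
have lampos : 0 < lam by rewrite /lam divr_gt0.
have lamn0 : lam != 0 by rewrite gt_eqF.
clearbody z.
pose g i := u i 0 - z i 0 - lam * u i 0 + lam / 2.
have pair : forall j k, u j 0 < 1 -> 0 < u k 0 -> g k <= g j.
  move=> j k hj hk; have [<-|jk] := eqVneq j k; first exact: lexx.
  have mj := mpos j; have mk := mpos k.
  pose D := (1 - lam) * ((m j)^-1 + (m k)^-1).
  have key : forall t, 0 < t -> t <= (1 - u j 0) * m j -> t <= u k 0 * m k ->
      0 <= 2 * (g j - g k) + t * D.
    move=> t t0 t1 t2.
    pose v := \col_i (u i 0 + t * ((i == j)%:R / m j - (i == k)%:R / m k)) : 'cV[R]_n.
    have vj : v j 0 = u j 0 + t / m j.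
      by rewrite mxE eqxx (negPf jk) /=; ring.
    have vk : v k 0 = u k 0 - t / m k.
      by rewrite mxE eqxx eq_sym (negPf jk) /=; ring.
    have vo : forall i, i != j -> i != k -> v i 0 = u i 0.
      by move=> i ij ik; rewrite mxE (negPf ij) (negPf ik) /=; ring.
    have tj : t / m j <= 1 - u j 0 by rewrite ler_pdivrMr.
    have tk : t / m k <= u k 0 by rewrite ler_pdivrMr.
    have tj0 : 0 < t / m j by rewrite divr_gt0.
    have tk0 : 0 < t / m k by rewrite divr_gt0.
    have vbox : inV01 v.
      move=> i; have [->|ij] := eqVneq i j.
        rewrite vj; have := hu j; move=> /andP [a b]; apply/andP; split; lra.
      have [->|ik] := eqVneq i k.
        rewrite vk; have := hu k; move=> /andP [a b]; apply/andP; split; lra.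
      rewrite vo //; exact: hu.
    have vmass : massV w r v = massV w r un.
      rewrite -hmu !hmass; apply/eqP; rewrite -subr_eq0; apply/eqP.
      rewrite (diff2 _ _ _ _ _ _ jk); last by move=> i ij ik; rewrite vo.
      by rewrite vj vk; field; rewrite !gt_eqF.
    have := hmin v vbox vmass; rewrite !hF -subr_ge0 (diff2 _ _ _ _ _ _ jk); last first.
      by move=> i ij ik; rewrite vo.
    rewrite vj vk.
    have -> : (lam * ((u j 0 + t / m j) * (1 - (u j 0 + t / m j))) + (u j 0 + t / m j - z j 0) ^+ 2) * m j -
      (lam * (u j 0 * (1 - u j 0)) + (u j 0 - z j 0) ^+ 2) * m j +
      ((lam * ((u k 0 - t / m k) * (1 - (u k 0 - t / m k))) + (u k 0 - t / m k - z k 0) ^+ 2) * m k -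
      (lam * (u k 0 * (1 - u k 0)) + (u k 0 - z k 0) ^+ 2) * m k) =
      t * (2 * (g j - g k) + t * D).
      by rewrite /g /D; field; rewrite !gt_eqF.
    by rewrite pmulr_rge0.
  have D0 : 0 <= D.
    by rewrite /D mulr_ge0 ?subr_ge0 // addr_ge0 // invr_ge0 ltW.
  rewrite leNgt; apply/negP => hlt.
  have a0 : g j - g k < 0 by rewrite subr_lt0.
  pose t0 := Num.min ((1 - u j 0) * m j) (u k 0 * m k).
  have t0pos : 0 < t0 by rewrite lt_min !mulr_gt0 // subr_gt0.
  pose t := Num.min t0 (- (g j - g k) / (D + 1)).
  have tpos : 0 < t by rewrite lt_min t0pos divr_gt0 // ?oppr_gt0 //; lra.
  have tt0 : t <= t0 by rewrite ge_min lexx.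
  have tt1 : t <= - (g j - g k) / (D + 1) by rewrite ge_min lexx orbT.
  have tt2 : t * (D + 1) <= - (g j - g k) by rewrite -ler_pdivlMr //; lra.
  have h01 : t0 <= (1 - u j 0) * m j by rewrite ge_min lexx.
  have h02 : t0 <= u k 0 * m k by rewrite ge_min lexx orbT.
  have := key t tpos (le_trans tt0 h01) (le_trans tt0 h02).
  have : 0 <= t * D by rewrite mulr_ge0 // ltW.
  nra.
suff [c hc] : exists c, forall i, (u i 0 = 0 -> c <= g i) /\
    (0 < u i 0 < 1 -> g i = c) /\ (u i 0 = 1 -> g i <= c).
  exists (\col_i ((g i - c) / lam)); split.
    move=> i; rewrite mxE; have [h1 [h2 h3]] := hc i; split; [|split].
    - by move=> /h1 hc1; rewrite divr_ge0 // subr_ge0.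
    - by move=> /h2 ->; rewrite subrr mul0r.
    - by move=> /h3 hc3; rewrite ler_pdivrMr // mul0r subr_le0.
  have S1pos : 0 < \sum_i m i.
    rewrite (bigD1 k0) //=; apply: (lt_le_trans (mpos k0)); rewrite lerDl.
    by apply: sumr_ge0 => i _; exact: ltW (mpos i).
  have Szu : \sum_i z i 0 * m i = \sum_i u i 0 * m i by rewrite -!hmass hz hmu.
  have Sg : \sum_i (g i - c) * m i =
      (1 - lam) * \sum_i u i 0 * m i - \sum_i z i 0 * m i + (lam / 2 - c) * \sum_i m i.
    rewrite !mulr_sumr -sumrB -!big_split; apply: eq_bigr => i _ /=; rewrite /g; ring.
  have Sb : \sum_i ((g i - c) / lam) * m i = (\sum_i (g i - c) * m i) / lam.
    rewrite mulr_suml; apply: eq_bigr => i _; ring.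
  apply/matrixP => i k; rewrite ord1 {k} /meanV !hmass.
  under [in RHS]eq_bigr do rewrite mxE.
  have S1e : \sum_i (const_mx 1 : 'cV[R]_n) i 0 * m i = \sum_i m i.
    by apply: eq_bigr => i' _; rewrite mxE mul1r.
  rewrite Sb Sg Szu /onesV !mxE S1e.
  rewrite /g; field.
  by rewrite lamn0 gt_eqF.
case: (boolP [exists k, 0 < u k 0]) => [/existsP [k1 hk1] | hno].
  case: (@arg_maxP _ R^o 'I_n k1 (fun k => 0 < u k 0) g hk1) => kk Pkk maxk.
  exists (g kk) => i; split; [|split].
  - by move=> h; apply: pair => //; rewrite h ltr01.
  - by move=> /andP [a b]; apply/le_anti/andP; split; [exact: maxk | exact: pair].
  - by move=> h; apply: maxk; rewrite /= h ltr01.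
have hu0 : forall k, ~~ (0 < u k 0).
  by move=> k; apply/negP => hk; move/negP: hno; apply; apply/existsP; exists k.
case: (@arg_minP _ R^o 'I_n k0 xpredT g isT) => kk _ mink.
exists (g kk) => i; split; [|split].
- by move=> _; apply: mink.
- by move=> /andP [a _]; move: (hu0 i); rewrite a.
- by move=> h; move: (hu0 i); rewrite h ltr01.
Qed.
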